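(* Let $c>0$, $\epsilon>0$, $T>0$, and let $\{\phi^j_t\}_{j\ge0}$, $t\in[0,T]$, be the solution of the infinite system $$\dot\phi^0_t=(\phi^0_t)^2-\epsilon,\ \phi^0_T=c;\qquad \dot\phi^1_t=2\phi^0_t\phi^1_t+\epsilon,\ \phi^1_T=-c;\qquad \dot\phi^j_t=\sum_{k=0}^{j}\phi^k_t\phi^{j-k}_t,\ \phi^j_T=0\ (j\ge2).$$ Then for every $t\in[0,T]$, $$\phi^0_t=\frac{(-\epsilon-c\sqrt\epsilon)e^{2\sqrt\epsilon(T-t)}+\epsilon-c\sqrt\epsilon}{(-\sqrt\epsilon-c)e^{2\sqrt\epsilon(T-t)}-\sqrt\epsilon+c}>0,$$ the series $\sum_{j\ge0}\phi^j_t$ converges and $\sum_{j=0}^\infty\phi^j_t=0$. Moreover the generating function $S_t(z)=\sum_{k\ge0}z^k\phi^k_t$ satisfies $S_t(1)=0$ and, for $0\le z<1$ (writing $w=\sqrt{\epsilon(1-z)}$), $$S_t(z)=\frac{(-\epsilon(1-z)-c\,w(1-z))e^{2w(T-t)}+\epsilon(1-z)-c\,w(1-z)}{(-w-c(1-z))e^{2w(T-t)}-w+c(1-z)},$$ so the $\phi^k_t$ are the Taylor coefficients of this function in $z$.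
   Context: Note that each equation for $\phi^j$ involves only $\phi^0,\dots,\phi^j$ (the equation for $\phi^j$, $j\ge1$, is linear in $\phi^j$ given the lower-index functions), so the system is solved recursively. *)

(* Defs.v *)
From Stdlib Require Import Reals Lra.
Open Scope R_scope.

Definition has_deriv_on (f f' : R -> R) (a b : R) : Prop :=
  forall t, a <= t <= b ->
    forall eps, 0 < eps -> exists delta, 0 < delta /\
      forall h, h <> 0 -> Rabs h < delta -> a <= t + h <= b ->
        Rabs ((f (t + h) - f t) / h - f' t) < eps.

Definition is_solution (c eps T : R) (phi : nat -> R -> R) : Prop :=
  has_deriv_on (phi 0%nat) (fun t => (phi 0%nat t) ^ 2 - eps) 0 T /\
  phi 0%nat T = c /\
  has_deriv_on (phi 1%nat) (fun t => 2 * phi 0%nat t * phi 1%nat t + eps) 0 T /\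
  phi 1%nat T = - c /\
  (forall j, (2 <= j)%nat ->
     has_deriv_on (phi j)
       (fun t => sum_f_R0 (fun k => phi k t * phi (j - k)%nat t) j) 0 T /\
     phi j T = 0).

(* Main.v *)
Require Import Defs.
From Stdlib Require Import Reals Lra Lia.
From Coquelicot Require Import Coquelicot.
Open Scope R_scope.


Definition Dom (a b t : R) := fun h => h <> 0 /\ a <= t + h <= b.

Lemma hd_lim f f' a b : has_deriv_on f f' a b <->
  forall t, a <= t <= b -> limit1_in (fun h => (f (t+h) - f t)/h) (Dom a b t) (f' t) 0.
Proof.
  unfold has_deriv_on, limit1_in, limit_in, Dom; simpl; unfold R_dist; split.
  - intros H t Ht e He. destruct (H t Ht e He) as [d [Hd Hh]]. exists d; split; [lra|].
    intros x [[Hx1 Hx2] Hx3]. apply Hh; auto; try (replace x with (x - 0) by ring; auto).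
  - intros H t Ht e He. destruct (H t Ht e He) as [d [Hd Hh]]. exists d; split; [lra|].
    intros h H1 H2 H3. apply Hh. split; [split; auto|]. now rewrite Rminus_0_r.
Qed.

Lemma limit_ext f g D l x0 : limit1_in f D l x0 -> (forall x, D x -> f x = g x) ->
  limit1_in g D l x0.
Proof.
  unfold limit1_in, limit_in; intros H E e He. destruct (H e He) as [d [Hd Hh]].
  exists d; split; auto. intros x [Dx Hx]. rewrite <- E; auto.
Qed.

Lemma limit_eql f D l l' x0 : limit1_in f D l x0 -> l = l' -> limit1_in f D l' x0.
Proof. intros; subst; auto. Qed.

Lemma hd_plus f f' g g' a b : has_deriv_on f f' a b -> has_deriv_on g g' a b ->
  has_deriv_on (fun t => f t + g t) (fun t => f' t + g' t) a b.
Proof.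
  rewrite !hd_lim; intros Hf Hg t Ht.
  apply limit_ext with (fun h => (f (t+h) - f t)/h + (g (t+h) - g t)/h).
  - apply limit_plus; [apply Hf|apply Hg]; auto.
  - intros x [Hx _]. field. auto.
Qed.

Lemma hd_minus f f' g g' a b : has_deriv_on f f' a b -> has_deriv_on g g' a b ->
  has_deriv_on (fun t => f t - g t) (fun t => f' t - g' t) a b.
Proof.
  rewrite !hd_lim; intros Hf Hg t Ht.
  apply limit_ext with (fun h => (f (t+h) - f t)/h - (g (t+h) - g t)/h).
  - apply limit_minus; [apply Hf|apply Hg]; auto.
  - intros x [Hx _]. field. auto.
Qed.

Lemma hd_ext f f' g g' a b : has_deriv_on f f' a b ->
  (forall t, f t = g t) -> (forall t, a <= t <= b -> f' t = g' t) -> has_deriv_on g g' a b.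
Proof.
  unfold has_deriv_on; intros H E1 E2 t Ht e He.
  destruct (H t Ht e He) as [d [Hd Hh]]. exists d; split; auto.
  intros h H1 H2 H3. rewrite <- !E1, <- E2; auto.
Qed.

Lemma hd_cont f f' a b t : has_deriv_on f f' a b -> a <= t <= b ->
  forall e, 0 < e -> exists d, 0 < d /\ forall h, Rabs h < d -> a <= t + h <= b ->
    Rabs (f (t+h) - f t) < e.
Proof.
  intros H Ht e He. destruct (H t Ht 1 Rlt_0_1) as [d [Hd Hh]].
  set (K := Rabs (f' t) + 1).
  assert (HK : 0 < K) by (unfold K; pose proof (Rabs_pos (f' t)); lra).
  exists (Rmin d (e / K)). split.
  { apply Rmin_glb_lt; auto. apply Rdiv_lt_0_compat; auto. }
  intros h Hh1 Hh2. destruct (Req_dec h 0) as [->|Hn].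
  { rewrite Rplus_0_r, Rminus_diag, Rabs_R0; auto. }
  assert (Hq := Hh h Hn (Rlt_le_trans _ _ _ Hh1 (Rmin_l _ _)) Hh2).
  assert (E : f (t+h) - f t = h * ((f (t+h) - f t)/h)) by (field; auto).
  rewrite E, Rabs_mult.
  assert (Rabs ((f (t + h) - f t) / h) <= K).
  { unfold K. pose proof (Rabs_triang_inv ((f (t + h) - f t) / h) (f' t)). lra. }
  assert (Rabs h < e / K) by (eapply Rlt_le_trans; [eauto| apply Rmin_r]).
  apply Rle_lt_trans with (Rabs h * K).
  { apply Rmult_le_compat_l; auto. apply Rabs_pos. }
  apply Rlt_le_trans with (e / K * K).
  { apply Rmult_lt_compat_r; auto. }
  right; field; lra.
Qed.

Lemma hd_cont_lim f f' a b t : has_deriv_on f f' a b -> a <= t <= b ->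
  limit1_in (fun h => f (t + h)) (Dom a b t) (f t) 0.
Proof.
  intros H Ht e He. destruct (hd_cont f f' a b t H Ht e He) as [d [Hd Hh]].
  exists d; split; [lra|]. intros x [[_ Hx] Hx2]. simpl in *. unfold R_dist in *.
  rewrite Rminus_0_r in Hx2. apply Hh; auto.
Qed.

Lemma hd_mult f f' g g' a b : has_deriv_on f f' a b -> has_deriv_on g g' a b ->
  has_deriv_on (fun t => f t * g t) (fun t => f' t * g t + f t * g' t) a b.
Proof.
  intros Hf0 Hg0. pose proof (proj1 (hd_lim _ _ _ _) Hf0) as Hf.
  pose proof (proj1 (hd_lim _ _ _ _) Hg0) as Hg.
  apply hd_lim; intros t Ht.
  apply limit_ext with (fun h => (f (t+h) - f t)/h * g (t+h) + f t * ((g (t+h) - g t)/h)).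
  - apply limit_plus.
    + apply limit_mul; [apply Hf; auto|]. eapply hd_cont_lim; eauto.
    + apply limit_mul; [apply (limit_free f)|apply Hg; auto].
  - intros x [Hx _]. field. auto.
Qed.

Lemma hd_const k a b : has_deriv_on (fun _ => k) (fun _ => 0) a b.
Proof.
  intros t Ht e He. exists 1; split; [lra|]. intros h H1 H2 H3.
  replace ((k - k) / h - 0) with 0 by (field; auto). rewrite Rabs_R0; auto.
Qed.

Lemma hd_of_derivable f f' a b : (forall t, a <= t <= b -> derivable_pt_lim f t (f' t)) ->
  has_deriv_on f f' a b.
Proof.
  intros H t Ht e He. destruct (H t Ht e He) as [d Hd]. exists d; split.
  - apply cond_pos.
  - intros h H1 H2 H3. apply Hd; auto.
Qed.

Lemma hd_sum (F F' : nat -> R -> R) a b N :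
  (forall k, (k <= N)%nat -> has_deriv_on (F k) (F' k) a b) ->
  has_deriv_on (fun t => sum_f_R0 (fun k => F k t) N) (fun t => sum_f_R0 (fun k => F' k t) N) a b.
Proof.
  induction N; intros H; simpl.
  - apply H; auto.
  - apply hd_plus; auto.
Qed.

Lemma barrier g g' a b : has_deriv_on g g' a b -> a <= b -> g b < 0 ->
  (forall t, a <= t <= b -> g t = 0 -> 0 < g' t) -> forall t, a <= t <= b -> g t < 0.
Proof.
  intros Hd Hab Hb Hz t0 Ht0. destruct (Rlt_or_le (g t0) 0) as [|Hg0]; auto. exfalso.
  set (E := fun x => t0 <= x <= b /\ 0 <= g x).
  assert (Hbd : bound E) by (exists b; intros x [Hx _]; lra).
  assert (Hex : exists x, E x) by (exists t0; split; [lra|auto]).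
  destruct (completeness E Hbd Hex) as [m [Hub Hlub]].
  assert (Hm1 : t0 <= m) by (apply Hub; split; [lra|auto]).
  assert (Hm2 : m <= b) by (apply Hlub; intros x [Hx _]; lra).
  assert (Hmr : a <= m <= b) by lra.
  assert (Hgm : 0 <= g m).
  { destruct (Rlt_or_le (g m) 0) as [Hlt|]; auto. exfalso.
    destruct (hd_cont g g' a b m Hd Hmr (- g m) ltac:(lra)) as [d [Hd0 Hdh]].
    assert (exists x, E x /\ m - d < x).
    { apply Classical_Pred_Type.not_all_not_ex. intros Hn.
      assert (m <= m - d); [|lra]. apply Hlub. intros x Hx.
      destruct (Rlt_or_le (m - d) x) as [Hl|]; auto. exfalso; apply (Hn x); auto. }
    destruct H as [x [[Hx1 Hx2] Hx3]]. assert (x <= m) by (apply Hub; split; auto).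
    assert (Hh := Hdh (x - m) ltac:(rewrite Rabs_left1; lra) ltac:(lra)).
    replace (m + (x - m)) with x in Hh by ring.
    apply Rabs_def2 in Hh. lra. }
  assert (Hmb : m < b) by (destruct (Req_dec m b); subst; lra).
  assert (Hpos : exists d, 0 < d /\ forall h, 0 < h < d -> m + h <= b -> 0 < g (m + h)).
  { destruct (Rle_lt_or_eq_dec _ _ Hgm) as [Hlt|Heq].
    - destruct (hd_cont g g' a b m Hd Hmr (g m) Hlt) as [d [Hd0 Hdh]].
      exists d; split; auto. intros h Hh1 Hh2.
      assert (Hh := Hdh h ltac:(rewrite Rabs_right; lra) ltac:(lra)).
      apply Rabs_def2 in Hh. lra.
    - assert (Hgp := Hz m Hmr (eq_sym Heq)).
      destruct (Hd m Hmr (g' m) Hgp) as [d [Hd0 Hdh]].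
      exists d; split; auto. intros h Hh1 Hh2.
      assert (Hh := Hdh h ltac:(lra) ltac:(rewrite Rabs_right; lra) ltac:(lra)).
      rewrite <- Heq, Rminus_0_r in Hh. apply Rabs_def2 in Hh.
      assert (0 < g (m + h) / h) by lra.
      replace (g (m+h)) with (g (m+h) / h * h) by (field; lra).
      apply Rmult_lt_0_compat; lra. }
  destruct Hpos as [d [Hd0 Hdh]].
  set (h := Rmin (d/2) (b - m)).
  assert (0 < h) by (unfold h; apply Rmin_glb_lt; lra).
  assert (h <= d/2) by apply Rmin_l. assert (h <= b - m) by apply Rmin_r.
  assert (m + h <= m); [|lra]. apply Hub. split; [lra|]. left. apply Hdh; lra.
Qed.

Lemma hd_expb d L b a0 b0 : has_deriv_on (fun t => d * exp (L * (b - t)))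
   (fun t => - (d * L) * exp (L * (b - t))) a0 b0.
Proof.
  apply hd_of_derivable. intros t _. apply is_derive_Reals.
  auto_derive; auto. replace (b + - t) with (b - t) by ring. ring.
Qed.

Lemma exp_mono x y : x <= y -> exp x <= exp y.
Proof. intros H; destruct (Rle_lt_or_eq_dec _ _ H) as [H' | ->]; [left; apply exp_increasing; auto|lra]. Qed.

Lemma GL f f' a b K : has_deriv_on f f' a b -> a <= b -> f b <= 0 -> 0 <= K ->
  (forall t, a <= t <= b -> 0 < f t <= 1 -> - K * f t <= f' t) ->
  forall t, a <= t <= b -> f t <= 0.
Proof.
  intros Hd Hab Hb HK Hc t1 Ht1. destruct (Rle_or_lt (f t1) 0) as [|Hp]; auto. exfalso.
  set (m := Rmin 1 (f t1)).
  assert (Hm : 0 < m) by (unfold m; apply Rmin_glb_lt; lra).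
  assert (Hm1 : m <= 1) by apply Rmin_l. assert (Hm2 : m <= f t1) by apply Rmin_r.
  set (L := K + 1). set (d := m * exp (- (L * (b - a)))).
  assert (Hdp : 0 < d) by (unfold d; apply Rmult_lt_0_compat; auto; apply exp_pos).
  assert (Hbd : forall t, a <= t <= b -> d * exp (L * (b - t)) <= m).
  { intros t Ht. unfold d. rewrite Rmult_assoc, <- exp_plus.
    rewrite <- (Rmult_1_r m) at 2. apply Rmult_le_compat_l; [lra|].
    rewrite <- exp_0. apply exp_mono. unfold L. nra. }
  assert (Hg := hd_minus _ _ _ _ _ _ Hd (hd_expb d L b a b)).
  assert (Hneg := barrier _ _ a b Hg Hab).
  assert (Hpos : forall t, 0 < exp (L * (b - t))) by (intros; apply exp_pos).
  assert (f t1 - d * exp (L * (b - t1)) < 0).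
  { apply Hneg; auto.
    - replace (b - b) with 0 by ring. rewrite Rmult_0_r, exp_0. lra.
    - intros t Ht Hz. assert (Hv := Hbd t Ht). specialize (Hpos t).
      assert (0 < d * exp (L * (b - t))) by (apply Rmult_lt_0_compat; auto).
      assert (Hft : f t = d * exp (L * (b - t))) by lra.
      assert (H1 := Hc t Ht ltac:(lra)). rewrite <- Hft in *. unfold L in *. nra. }
  assert (Hv := Hbd t1 Ht1). lra.
Qed.

Definition Ff (w c' T t : R) := w * ((w + c') * exp (2*w*(T - t)) + c' - w) /
   ((w + c') * exp (2*w*(T-t)) + w - c').

Lemma exp_ge1 x : 0 <= x -> 1 <= exp x.
Proof. intros; rewrite <- exp_0; apply exp_mono; auto. Qed.

Lemma Ff_den w c' T t : 0 < w -> 0 <= c' -> t <= T ->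
  2 * w <= (w + c') * exp (2*w*(T-t)) + w - c'.
Proof.
  intros. assert (1 <= exp (2*w*(T-t))) by (apply exp_ge1; nra). nra.
Qed.

Lemma Ff_deriv w c' T t : 0 < w -> 0 <= c' -> t <= T ->
  derivable_pt_lim (Ff w c' T) t (Ff w c' T t ^ 2 - w ^ 2).
Proof.
  intros Hw Hc Ht. assert (Hd := Ff_den w c' T t Hw Hc Ht).
  apply is_derive_Reals. unfold Ff. auto_derive.
  - replace (T + - t) with (T - t) by ring. lra.
  - replace (T + - t) with (T - t) by ring. field. lra.
Qed.

Lemma Ff_T w c' T : 0 < w -> Ff w c' T T = c'.
Proof. intros. unfold Ff. rewrite Rminus_diag, Rmult_0_r, exp_0. field. lra. Qed.

Lemma Ff_bounds w c' T t : 0 < w -> 0 <= c' -> t <= T ->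
  0 <= Ff w c' T t <= ((w + c') * exp (2*w*(T-t)) + c') / 2 /\
  (0 < c' -> 0 < Ff w c' T t).
Proof.
  intros Hw Hc Ht. assert (Hd := Ff_den w c' T t Hw Hc Ht).
  assert (1 <= exp (2*w*(T-t))) by (apply exp_ge1; nra).
  set (E := exp (2*w*(T-t))) in *. unfold Ff. fold E.
  set (D := (w + c') * E + w - c') in *.
  assert (HN : 2 * c' <= (w + c') * E + c' - w) by nra.
  split; [split|].
  - apply Rmult_le_pos; [nra|]. left; apply Rinv_0_lt_compat; lra.
  - apply Rmult_le_reg_r with D; [lra|]. unfold Rdiv. rewrite Rmult_assoc, Rinv_l by lra.
    nra.
  - intros. apply Rdiv_lt_0_compat; nra.
Qed.

Definition conv (phi : nat -> R -> R) j t := sum_f_R0 (fun k => phi k t * phi (j - k)%nat t) j.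
Definition dphi (eps : R) (phi : nat -> R -> R) j t :=
  match j with O => phi 0%nat t ^ 2 - eps | S O => 2 * phi 0%nat t * phi 1%nat t + eps
  | _ => conv phi j t end.

Lemma hd_phi c eps T phi : is_solution c eps T phi -> forall j, has_deriv_on (phi j) (dphi eps phi j) 0 T.
Proof.
  intros [H0 [_ [H1 [_ H2]]]] [|[|j]]; simpl; auto. apply H2. lia.
Qed.

Lemma phi0_eq c eps T phi : 0 < c -> 0 < eps -> 0 < T -> is_solution c eps T phi ->
  forall t, 0 <= t <= T -> phi 0%nat t = Ff (sqrt eps) c T t.
Proof.
  intros hc he hT hs. assert (Hs : 0 < sqrt eps) by (apply sqrt_lt_R0; auto).
  assert (Hs2 : sqrt eps ^ 2 = eps) by (simpl; rewrite Rmult_1_r; apply sqrt_sqrt; lra).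
  assert (HA : has_deriv_on (Ff (sqrt eps) c T) (fun t => Ff (sqrt eps) c T t ^ 2 - sqrt eps ^ 2) 0 T).
  { apply hd_of_derivable. intros t Ht. apply Ff_deriv; lra. }
  assert (HP := hd_phi c eps T phi hs 0%nat). simpl in HP.
  assert (Hb : forall t, 0 <= t <= T -> 0 <= Ff (sqrt eps) c T t).
  { intros t Ht. apply Ff_bounds; lra. }
  assert (HT0 : phi 0%nat T = c) by apply hs.
  assert (HAT : Ff (sqrt eps) c T T = c) by (apply Ff_T; auto).
  intros t Ht. apply Rle_antisym.
  - assert (G := GL _ _ 0 T 0 (hd_minus _ _ _ _ _ _ HP HA) ltac:(lra) ltac:(lra) ltac:(lra)).
    cut (phi 0%nat t - Ff (sqrt eps) c T t <= 0); [lra|]. apply G; auto.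
    intros s Hs' Hf. rewrite Hs2. assert (Hbs := Hb s Hs'). simpl in *. clear G. set (p := phi 0%nat s) in *. set (A := Ff (sqrt eps) c T s) in *. nra.
  - assert (G := GL _ _ 0 T 1 (hd_minus _ _ _ _ _ _ HA HP) ltac:(lra) ltac:(lra) ltac:(lra)).
    cut (Ff (sqrt eps) c T t - phi 0%nat t <= 0); [lra|]. apply G; auto.
    intros s Hs' Hf. rewrite Hs2. assert (Hbs := Hb s Hs'). simpl in *. clear G. set (p := phi 0%nat s) in *. set (A := Ff (sqrt eps) c T s) in *. nra.
Qed.

Lemma sum_nonneg f N : (forall i, (i <= N)%nat -> 0 <= f i) -> 0 <= sum_f_R0 f N.
Proof.
  induction N; intros H; simpl. apply H; lia.
  assert (0 <= sum_f_R0 f N) by (apply IHN; intros; apply H; lia).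
  assert (0 <= f (S N)) by (apply H; lia). lra.
Qed.

Lemma phi0_pos c eps T phi : 0 < c -> 0 < eps -> 0 < T -> is_solution c eps T phi ->
  forall t, 0 <= t <= T -> 0 < phi 0%nat t.
Proof.
  intros hc he hT hs t Ht. rewrite (phi0_eq c eps T phi) by auto.
  apply Ff_bounds; try lra. apply sqrt_lt_R0; auto.
Qed.

Lemma phi_neg c eps T phi : 0 < c -> 0 < eps -> 0 < T -> is_solution c eps T phi ->
  forall j, (1 <= j)%nat -> forall t, 0 <= t <= T -> phi j t <= 0.
Proof.
  intros hc he hT hs. assert (Hp := phi0_pos c eps T phi hc he hT hs).
  assert (Hd := hd_phi c eps T phi hs).
  assert (Main : forall n j, (1 <= j <= n)%nat -> forall t, 0 <= t <= T -> phi j t <= 0).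
  { induction n; intros j Hj; [lia|].
    destruct (Nat.eq_dec j (S n)) as [->|Hne]; [|apply IHn; lia].
    destruct n as [|n].
    - apply (GL _ _ 0 T 0 (Hd 1%nat)); try lra.
      + destruct hs as [_ [_ [_ [H _]]]]. lra.
      + intros s Hs Hf. simpl. assert (Hq := Hp s Hs). nra.
    - apply (GL _ _ 0 T 0 (Hd (S (S n)))); try lra.
      + destruct hs as [_ [_ [_ [_ H]]]]. destruct (H (S (S n))) as [_ ->]; [lia|lra].
      + intros s Hs Hf. simpl dphi. replace (- 0 * phi (S (S n)) s) with 0 by ring. unfold conv.
        apply sum_nonneg. intros k Hk.
        destruct (Nat.eq_dec k 0) as [->|Hk0].
        { rewrite Nat.sub_0_r. assert (Hq := Hp s Hs). nra. }
        destruct (Nat.eq_dec k (S (S n))) as [->|Hk1].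
        { rewrite Nat.sub_diag. assert (Hq := Hp s Hs). nra. }
        assert (phi k s <= 0) by (apply IHn; auto; lia).
        assert (phi (S (S n) - k)%nat s <= 0) by (apply IHn; auto; lia). nra. }
  intros j Hj. apply (Main j). lia.
Qed.

Lemma sum_zero f N : (forall i, (i <= N)%nat -> f i = 0) -> sum_f_R0 f N = 0.
Proof.
  induction N; intros H; simpl. apply H; lia.
  rewrite IHN, H; [ring|lia|]. intros; apply H; lia.
Qed.

Lemma sum_single F M m v : (m <= M)%nat ->
  (forall l, (l <= M)%nat -> F l = if Nat.eqb l m then v else 0) -> sum_f_R0 F M = v.
Proof.
  induction M; intros Hm H.
  - simpl. rewrite H by lia. assert (m = 0)%nat by lia. subst. reflexivity.
  - simpl. destruct (Nat.eq_dec m (S M)) as [->|Hne].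
    + rewrite sum_zero. rewrite H, Nat.eqb_refl by lia. ring.
      intros i Hi. rewrite H by lia. destruct (Nat.eqb_spec i (S M)); [lia|auto].
    + rewrite IHM; [|lia|intros; apply H; lia]. rewrite H by lia.
      destruct (Nat.eqb_spec (S M) m); [lia|ring].
Qed.

Lemma tri (f : nat -> nat -> R) N :
  sum_f_R0 (fun j => sum_f_R0 (fun k => f k (j - k)%nat) j) N =
  sum_f_R0 (fun k => sum_f_R0 (fun l => if Nat.leb (k + l) N then f k l else 0) N) N.
Proof.
  induction N.
  - simpl. reflexivity.
  - rewrite tech5, IHN.
    transitivity (sum_f_R0 (fun k => sum_f_R0 (fun l => (if Nat.leb (k + l) N then f k l else 0)
        + (if Nat.eqb (k + l) (S N) then f k l else 0)) (S N)) (S N)).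
    2:{ apply sum_eq; intros k Hk. apply sum_eq; intros l Hl.
        destruct (Nat.leb_spec (k+l) N); destruct (Nat.eqb_spec (k+l) (S N));
        destruct (Nat.leb_spec (k+l) (S N)); try lia; ring. }
    rewrite (sum_eq (fun k => sum_f_R0 (fun l => (if Nat.leb (k + l) N then f k l else 0)
        + (if Nat.eqb (k + l) (S N) then f k l else 0)) (S N)) (fun k => sum_f_R0 (fun l => if Nat.leb (k + l) N then f k l else 0) (S N)
        + sum_f_R0 (fun l => if Nat.eqb (k + l) (S N) then f k l else 0) (S N)))
      by (intros; apply plus_sum).
    rewrite plus_sum. f_equal.
    + rewrite tech5. rewrite (sum_zero (fun l => if Nat.leb (S N + l) N then f (S N) l else 0))
        by (intros; destruct (Nat.leb_spec (S N + i) N); [lia|auto]).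
      rewrite Rplus_0_r. apply sum_eq; intros k Hk. rewrite tech5.
      destruct (Nat.leb_spec (k + S N) N); [lia|ring].
    + apply sum_eq; intros k Hk. symmetry. apply sum_single with (m := (S N - k)%nat); [lia|].
      intros l Hl. destruct (Nat.eqb_spec (k + l) (S N)); destruct (Nat.eqb_spec l (S N - k));
        try lia; subst; auto.
Qed.

Lemma prod_sums (a b : nat -> R) N M :
  sum_f_R0 a N * sum_f_R0 b M = sum_f_R0 (fun k => sum_f_R0 (fun l => a k * b l) M) N.
Proof.
  rewrite Rmult_comm, scal_sum. apply sum_eq; intros k _. rewrite scal_sum.
  apply sum_eq; intros; ring.
Qed.

Definition Pn (z : R) (phi : nat -> R -> R) N t := sum_f_R0 (fun j => z ^ j * phi j t) N.
Definition Cn (z : R) (phi : nat -> R -> R) N t :=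
  sum_f_R0 (fun j => sum_f_R0 (fun k => (z ^ k * phi k t) * (z ^ (j - k) * phi (j - k)%nat t)) j) N.
Definition Rn (z : R) (phi : nat -> R -> R) N t :=
  sum_f_R0 (fun k => sum_f_R0 (fun l => if Nat.leb (k + l) N then 0
     else (z ^ k * phi k t) * (z ^ l * phi l t)) N) N.

Lemma hd_Pn c eps T phi z N : is_solution c eps T phi ->
  has_deriv_on (Pn z phi N) (fun t => sum_f_R0 (fun j => z ^ j * dphi eps phi j t) N) 0 T.
Proof.
  intros hs. unfold Pn. apply (hd_sum (fun j t => z ^ j * phi j t)). intros k _.
  eapply hd_ext. apply (hd_mult (fun _ => z ^ k) (fun _ => 0) (phi k)). apply hd_const. apply (hd_phi c eps T phi hs).
  all: intros; simpl; ring.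
Qed.

Lemma Cn_eq z phi N t : Cn z phi N t = Pn z phi N t ^ 2 - Rn z phi N t.
Proof.
  unfold Cn. rewrite (tri (fun k l => (z ^ k * phi k t) * (z ^ l * phi l t))).
  unfold Pn, Rn. replace (sum_f_R0 (fun j => z ^ j * phi j t) N ^ 2) with (sum_f_R0 (fun j => z ^ j * phi j t) N * sum_f_R0 (fun j => z ^ j * phi j t) N) by ring. rewrite prod_sums. rewrite <- minus_sum. apply sum_eq; intros k _.
  rewrite <- minus_sum. apply sum_eq; intros l _. destruct (Nat.leb (k + l) N); ring.
Qed.

Lemma conv_scale z phi j t : z ^ j * conv phi j t =
  sum_f_R0 (fun k => (z ^ k * phi k t) * (z ^ (j - k) * phi (j - k)%nat t)) j.
Proof.
  unfold conv. rewrite scal_sum. apply sum_eq; intros k Hk.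
  replace (z ^ j) with (z ^ k * z ^ (j - k)) by (rewrite <- pow_add; f_equal; lia). ring.
Qed.

Lemma dsum eps phi z N t : (1 <= N)%nat ->
  sum_f_R0 (fun j => z ^ j * dphi eps phi j t) N = Cn z phi N t - eps * (1 - z).
Proof.
  intros HN. induction N; [lia|]. destruct N.
  - unfold Cn. simpl. ring.
  - unfold Cn in *. rewrite tech5, IHN by lia. rewrite (tech5 _ (S N)).
    simpl dphi. rewrite conv_scale. ring.
Qed.

Lemma Pn_T c eps T phi z N : is_solution c eps T phi -> (1 <= N)%nat ->
  Pn z phi N T = c * (1 - z).
Proof.
  intros hs HN. induction N; [lia|]. destruct hs as [_ [H0 [_ [H1 H2]]]]. destruct N.
  - unfold Pn. simpl. rewrite H0, H1. ring.
  - unfold Pn in *. rewrite tech5, IHN by lia. destruct (H2 (S (S N))) as [_ ->]; [lia|ring].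
Qed.

Lemma Pn_le c eps T phi z N t : 0 < c -> 0 < eps -> 0 < T -> is_solution c eps T phi ->
  0 <= z -> 0 <= t <= T -> Pn z phi N t <= phi 0%nat t.
Proof.
  intros hc he hT hs Hz Ht. induction N.
  - unfold Pn; simpl; lra.
  - unfold Pn in *. rewrite tech5. assert (phi (S N) t <= 0) by (apply (phi_neg c eps T); auto; lia).
    assert (0 <= z ^ S N) by (apply pow_le; auto). nra.
Qed.

Lemma Rn_nonneg c eps T phi z N t : 0 < c -> 0 < eps -> 0 < T -> is_solution c eps T phi ->
  0 <= z -> 0 <= t <= T -> 0 <= Rn z phi N t.
Proof.
  intros hc he hT hs Hz Ht. unfold Rn. apply sum_nonneg; intros k Hk. apply sum_nonneg; intros l Hl.
  destruct (Nat.leb_spec (k + l) N); [lra|].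
  assert (phi k t <= 0) by (apply (phi_neg c eps T); auto; lia).
  assert (phi l t <= 0) by (apply (phi_neg c eps T); auto; lia).
  assert (0 <= z ^ k) by (apply pow_le; auto). assert (0 <= z ^ l) by (apply pow_le; auto).
  assert (z ^ k * phi k t <= 0) by nra. assert (z ^ l * phi l t <= 0) by nra. nra.
Qed.

Lemma lower c eps T phi z F N : 0 < c -> 0 < eps -> 0 < T -> is_solution c eps T phi ->
  0 <= z <= 1 -> has_deriv_on F (fun t => F t ^ 2 - eps * (1 - z)) 0 T ->
  F T = c * (1 - z) -> (forall t, 0 <= t <= T -> 0 <= F t) -> (1 <= N)%nat ->
  forall t, 0 <= t <= T -> F t <= Pn z phi N t.
Proof.
  intros hc he hT hs Hz HF FT Fpos HN t Ht.
  cut (F t - Pn z phi N t <= 0); [lra|].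
  apply (GL _ _ 0 T 1 (hd_minus _ _ _ _ _ _ HF (hd_Pn c eps T phi z N hs))); try lra; auto.
  - rewrite FT, (Pn_T c eps T phi z N hs HN). lra.
  - intros s Hs Hf. rewrite dsum, Cn_eq by auto.
    assert (Hr := Rn_nonneg c eps T phi z N s hc he hT hs ltac:(lra) Hs).
    assert (HFs := Fpos s Hs).
    set (P := Pn z phi N s) in *. set (R := Rn z phi N s) in *. set (G := F s) in *. nra.
Qed.

Lemma upper c eps T phi z F N eta : 0 < c -> 0 < eps -> 0 < T -> is_solution c eps T phi ->
  0 <= z <= 1 -> has_deriv_on F (fun t => F t ^ 2 - eps * (1 - z)) 0 T ->
  F T = c * (1 - z) -> (forall t, 0 <= t <= T -> 0 <= F t) -> (1 <= N)%nat ->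
  (forall t, 0 <= t <= T -> Rn z phi N t <= eta) -> 0 <= eta ->
  forall t, 0 <= t <= T -> Pn z phi N t - F t <= eta * (exp (T - t) - 1).
Proof.
  intros hc he hT hs Hz HF FT Fpos HN HR Heta t Ht.
  assert (Hlow := lower c eps T phi z F N hc he hT hs Hz HF FT Fpos HN).
  assert (He := hd_minus _ _ _ _ _ _ (hd_expb eta 1 T 0 T) (hd_const eta 0 T)).
  assert (Hd := hd_minus _ _ _ _ _ _ (hd_minus _ _ _ _ _ _ (hd_Pn c eps T phi z N hs) HF) He).
  cut (Pn z phi N t - F t - (eta * exp (1 * (T - t)) - eta) <= 0).
  { rewrite Rmult_1_l. lra. }
  apply (GL _ _ 0 T 0 Hd); try lra; auto.
  - rewrite (Pn_T c eps T phi z N hs HN), FT. replace (1 * (T - T)) with 0 by ring. rewrite exp_0. lra.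
  - intros s Hs Hf. simpl. rewrite dsum, Cn_eq by auto.
    assert (Hr := HR s Hs). assert (HFs := Fpos s Hs). assert (HL := Hlow s Hs).
    assert (1 <= exp (1 * (T - s))) by (apply exp_ge1; lra).
    set (P := Pn z phi N s) in *. set (R := Rn z phi N s) in *. set (G := F s) in *.
    set (E := exp (1 * (T - s))) in *. nra.
Qed.

Lemma pow_le1 x n : 0 <= x <= 1 -> x ^ n <= 1.
Proof. intros H; induction n; simpl; [lra|]. assert (0 <= x ^ n) by (apply pow_le; lra). nra. Qed.

Lemma pow_decr x n m : 0 <= x <= 1 -> (n <= m)%nat -> x ^ m <= x ^ n.
Proof.
  intros H Hnm. replace m with (n + (m - n))%nat by lia. rewrite pow_add.
  assert (0 <= x ^ n) by (apply pow_le; lra). assert (x ^ (m - n) <= 1) by (apply pow_le1; auto).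
  assert (0 <= x ^ (m - n)) by (apply pow_le; lra). nra.
Qed.

Lemma FF_ok c eps T z : 0 < c -> 0 < eps -> 0 <= z < 1 ->
  let w := sqrt (eps * (1 - z)) in
  0 < w /\ w * w = eps * (1 - z) /\
  has_deriv_on (Ff w (c * (1 - z)) T) (fun t => Ff w (c * (1 - z)) T t ^ 2 - eps * (1 - z)) 0 T /\
  Ff w (c * (1 - z)) T T = c * (1 - z) /\
  (forall t, 0 <= t <= T -> 0 <= Ff w (c * (1 - z)) T t).
Proof.
  intros hc he Hz w. assert (Hw : 0 < w) by (apply sqrt_lt_R0; nra).
  assert (Hw2 : w * w = eps * (1 - z)) by (apply sqrt_sqrt; nra).
  split; [auto|split; [auto|split; [|split]]].
  - apply hd_of_derivable. intros t Ht. rewrite <- Hw2.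
    replace (w * w) with (w ^ 2) by ring. apply Ff_deriv; nra.
  - apply Ff_T; auto.
  - intros t Ht. apply Ff_bounds; nra.
Qed.

Definition Mb c eps T := ((sqrt eps + c) * exp (2 * sqrt eps * T) + c) / 2.

Lemma phi0_le c eps T phi : 0 < c -> 0 < eps -> 0 < T -> is_solution c eps T phi ->
  forall t, 0 <= t <= T -> phi 0%nat t <= Mb c eps T.
Proof.
  intros hc he hT hs t Ht. rewrite (phi0_eq c eps T phi) by auto.
  assert (Hs : 0 < sqrt eps) by (apply sqrt_lt_R0; auto).
  destruct (Ff_bounds (sqrt eps) c T t Hs ltac:(lra) ltac:(lra)) as [[_ H] _].
  unfold Mb. assert (exp (2 * sqrt eps * (T - t)) <= exp (2 * sqrt eps * T)) by (apply exp_mono; nra).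
  nra.
Qed.

Lemma coef_bound c eps T phi z k t : 0 < c -> 0 < eps -> 0 < T -> is_solution c eps T phi ->
  0 <= z < 1 -> 0 <= t <= T -> z ^ k * Rabs (phi k t) <= Mb c eps T.
Proof.
  intros hc he hT hs Hz Ht. assert (HM := phi0_le c eps T phi hc he hT hs t Ht).
  assert (Hp := phi0_pos c eps T phi hc he hT hs t Ht).
  destruct k as [|k].
  - simpl. rewrite Rabs_right; lra.
  - destruct (FF_ok c eps T z hc he Hz) as [_ [_ [HF [FT Fpos]]]].
    assert (Hl := lower c eps T phi z _ (S k) hc he hT hs ltac:(lra) HF FT Fpos ltac:(lia) t Ht).
    assert (Hu := Pn_le c eps T phi z k t hc he hT hs ltac:(lra) Ht).
    assert (Hf := Fpos t Ht). unfold Pn in *. rewrite tech5 in Hl.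
    assert (phi (S k) t <= 0) by (apply (phi_neg c eps T); auto; lia).
    rewrite Rabs_left1 by auto. lra.
Qed.

Lemma geo_sum r N : 0 <= r < 1 -> sum_f_R0 (fun k => r ^ k) N <= 1 / (1 - r).
Proof.
  intros H. rewrite tech3 by lra. assert (0 <= r ^ S N) by (apply pow_le; lra).
  unfold Rdiv. apply Rmult_le_compat_r; [left; apply Rinv_0_lt_compat; lra|lra].
Qed.

Lemma Rn_bound c eps T phi z N t : 0 < c -> 0 < eps -> 0 < T -> is_solution c eps T phi ->
  0 <= z < 1 -> 0 <= t <= T ->
  let rho := (1 + z) / 2 in
  Rn z phi N t <= Mb c eps T ^ 2 * rho ^ (S N) * (1 / (1 - rho)) ^ 2.
Proof.
  intros hc he hT hs Hz Ht rho.
  set (M := Mb c eps T).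
  assert (Hr : 1/2 <= rho < 1) by (unfold rho; lra).
  set (z' := z / rho ^ 2).
  assert (Hz' : 0 <= z' < 1).
  { unfold z'. split. unfold Rdiv; apply Rmult_le_pos; [lra|left; apply Rinv_0_lt_compat; nra].
    apply Rmult_lt_reg_r with (rho ^ 2); [nra|]. unfold Rdiv. rewrite Rmult_assoc, Rinv_l by nra.
    unfold rho. nra. }
  assert (Hx : forall k, Rabs (z ^ k * phi k t) <= M * (rho ^ k) ^ 2).
  { intros k. rewrite Rabs_mult, Rabs_right by (apply Rle_ge, pow_le; lra).
    replace z with (rho ^ 2 * z') by (unfold z'; field; nra).
    rewrite Rpow_mult_distr, <- pow_mult, (Nat.mul_comm 2 k), pow_mult.
    assert (H := coef_bound c eps T phi z' k t hc he hT hs Hz' Ht).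
    assert (0 <= (rho ^ k) ^ 2) by (apply pow_le; apply pow_le; lra).
    rewrite Rmult_assoc. rewrite (Rmult_comm M). apply Rmult_le_compat_l; auto. }
  assert (HM : 0 <= M).
  { assert (H := Hx 0%nat). simpl in H. pose proof (Rabs_pos (1 * phi 0%nat t)). lra. }
  unfold Rn.
  apply Rle_trans with (sum_f_R0 (fun k => sum_f_R0 (fun l =>
     (M ^ 2 * rho ^ S N) * (rho ^ k * rho ^ l)) N) N).
  - apply sum_Rle; intros k Hk. apply sum_Rle; intros l Hl.
    assert (0 <= rho ^ k) by (apply pow_le; lra). assert (0 <= rho ^ l) by (apply pow_le; lra).
    assert (0 <= rho ^ S N) by (apply pow_le; lra).
    destruct (Nat.leb_spec (k + l) N). { apply Rmult_le_pos; [|nra]. apply Rmult_le_pos; [nra|auto]. }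
    apply Rle_trans with (Rabs (z ^ k * phi k t) * Rabs (z ^ l * phi l t)).
    { rewrite <- Rabs_mult. apply Rle_abs. }
    apply Rle_trans with (M * (rho ^ k) ^ 2 * (M * (rho ^ l) ^ 2)).
    { apply Rmult_le_compat; try apply Rabs_pos; apply Hx. }
    assert (Hd := pow_decr rho (S N) (k + l) ltac:(lra) ltac:(lia)). rewrite pow_add in Hd.
    assert (0 <= rho ^ k * rho ^ l) by nra.
    replace (M * (rho ^ k) ^ 2 * (M * (rho ^ l) ^ 2)) with
      (M ^ 2 * (rho ^ k * rho ^ l) * (rho ^ k * rho ^ l)) by ring.
    replace (M ^ 2 * rho ^ S N * (rho ^ k * rho ^ l)) with
      (M ^ 2 * (rho ^ k * rho ^ l) * rho ^ S N) by ring.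
    apply Rmult_le_compat_l; auto. apply Rmult_le_pos; auto. nra.
  - rewrite (sum_eq _ (fun k => sum_f_R0 (fun l => (M ^ 2 * rho ^ S N * rho ^ k) * rho ^ l) N))
      by (intros; apply sum_eq; intros; ring).
    rewrite <- (prod_sums (fun k => M ^ 2 * rho ^ S N * rho ^ k) (fun l => rho ^ l)).
    rewrite (sum_eq _ (fun k => rho ^ k * (M ^ 2 * rho ^ S N))) by (intros; ring).
    rewrite <- (scal_sum (fun k => rho ^ k) N (M ^ 2 * rho ^ S N)).
    assert (Hg := geo_sum rho N ltac:(lra)).
    assert (0 <= sum_f_R0 (fun k => rho ^ k) N) by (apply sum_nonneg; intros; apply pow_le; lra).
    assert (0 <= M ^ 2 * rho ^ S N) by (apply Rmult_le_pos; [nra|apply pow_le; lra]).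
    replace ((1 / (1 - rho)) ^ 2) with ((1 / (1 - rho)) * (1 / (1 - rho))) by ring.
    rewrite Rmult_assoc. apply Rmult_le_compat_l; auto. apply Rmult_le_compat; auto.
Qed.

Lemma form_eq w e' c' a T t : 0 < w -> e' = w * w -> a = c' * w -> 0 <= c' -> t <= T ->
  ((- e' - a) * exp (2 * w * (T - t)) + e' - a) /
  ((- w - c') * exp (2 * w * (T - t)) - w + c') = Ff w c' T t.
Proof.
  intros Hw He Ha Hc Ht. assert (Hd := Ff_den w c' T t Hw Hc Ht). subst. unfold Ff.
  set (E := exp (2 * w * (T - t))) in *. field. split; lra.
Qed.

Lemma conv_z c eps T phi z t : 0 < c -> 0 < eps -> 0 < T -> is_solution c eps T phi ->
  0 <= z < 1 -> 0 <= t <= T ->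
  forall e, 0 < e -> exists N0, forall n, (n >= N0)%nat ->
    Rabs (Pn z phi n t - Ff (sqrt (eps * (1 - z))) (c * (1 - z)) T t) < e.
Proof.
  intros hc he hT hs Hz Ht e He.
  destruct (FF_ok c eps T z hc he Hz) as [_ [_ [HF [FT Fpos]]]].
  set (F := Ff (sqrt (eps * (1 - z))) (c * (1 - z)) T) in *.
  set (rho := (1 + z) / 2). set (M := Mb c eps T).
  assert (Hr : 1/2 <= rho < 1) by (unfold rho; lra).
  set (K := M ^ 2 * (1 / (1 - rho)) ^ 2 * exp T).
  assert (HK : 0 <= K).
  { unfold K. apply Rmult_le_pos; [|left; apply exp_pos]. apply Rmult_le_pos; [nra|].
    apply pow_le. unfold Rdiv. rewrite Rmult_1_l. left; apply Rinv_0_lt_compat; lra. }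
  destruct (pow_lt_1_zero rho ltac:(rewrite Rabs_right; lra) (e / (K + 1))
     ltac:(apply Rdiv_lt_0_compat; lra)) as [N0 HN0].
  exists (max N0 1). intros n Hn.
  assert (Hl := lower c eps T phi z F n hc he hT hs ltac:(lra) HF FT Fpos ltac:(lia) t Ht).
  set (eta := M ^ 2 * rho ^ S n * (1 / (1 - rho)) ^ 2).
  assert (Heta : 0 <= eta).
  { unfold eta. apply Rmult_le_pos; [apply Rmult_le_pos; [nra|apply pow_le; lra]|].
    apply pow_le. unfold Rdiv. rewrite Rmult_1_l. left; apply Rinv_0_lt_compat; lra. }
  assert (Hu := upper c eps T phi z F n eta hc he hT hs ltac:(lra) HF FT Fpos ltac:(lia)
     (fun s Hs => Rn_bound c eps T phi z n s hc he hT hs Hz Hs) Heta t Ht).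
  assert (Hp := HN0 (S n) ltac:(lia)). rewrite Rabs_right in Hp by (apply Rle_ge, pow_le; lra).
  assert (HeT : exp (T - t) <= exp T) by (apply exp_mono; lra).
  assert (Hb : eta * (exp (T - t) - 1) <= rho ^ S n * K).
  { unfold eta, K. assert (0 <= M ^ 2 * (1 / (1 - rho)) ^ 2).
    { apply Rmult_le_pos; [nra|]. apply pow_le. unfold Rdiv. rewrite Rmult_1_l. left; apply Rinv_0_lt_compat; lra. }
    assert (0 <= rho ^ S n) by (apply pow_le; lra).
    replace (M ^ 2 * rho ^ S n * (1 / (1 - rho)) ^ 2 * (exp (T - t) - 1)) with
      ((rho ^ S n * (M ^ 2 * (1 / (1 - rho)) ^ 2)) * (exp (T - t) - 1)) by ring.
    replace (rho ^ S n * (M ^ 2 * (1 / (1 - rho)) ^ 2 * exp T)) with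
      ((rho ^ S n * (M ^ 2 * (1 / (1 - rho)) ^ 2)) * exp T) by ring.
    apply Rmult_le_compat_l; [apply Rmult_le_pos; auto|lra]. }
  assert (rho ^ S n * (K + 1) < e).
  { apply Rmult_lt_reg_r with (/ (K + 1)). apply Rinv_0_lt_compat; lra.
    rewrite Rmult_assoc, Rinv_r by lra. lra. }
  assert (0 <= rho ^ S n) by (apply pow_le; lra).
  rewrite Rabs_right by lra. nra.
Qed.

Lemma F_small c eps T t : 0 < c -> 0 < eps -> 0 <= t <= T -> forall e, 0 < e ->
  exists z, 0 <= z < 1 /\ Ff (sqrt (eps * (1 - z))) (c * (1 - z)) T t < e.
Proof.
  intros hc he Ht e He.
  set (B := exp (2 * sqrt eps * T)).
  assert (HB : 1 <= B) by (apply exp_ge1; assert (0 <= sqrt eps) by apply sqrt_pos; nra).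
  set (u := Rmin (1/2) (Rmin (e ^ 2 / (16 * B ^ 2 * eps)) (e / (4 * c * (B + 1))))).
  assert (Hu1 : u <= 1/2) by apply Rmin_l.
  assert (Hu2 : u <= e ^ 2 / (16 * B ^ 2 * eps)) by (eapply Rle_trans; [apply Rmin_r|apply Rmin_l]).
  assert (Hu3 : u <= e / (4 * c * (B + 1))) by (eapply Rle_trans; [apply Rmin_r|apply Rmin_r]).
  assert (Hu0 : 0 < u).
  { unfold u. repeat apply Rmin_glb_lt; try lra; apply Rdiv_lt_0_compat; try nra.
    apply Rmult_lt_0_compat; [nra|lra]. }
  exists (1 - u). split; [lra|]. replace (1 - (1 - u)) with u by ring.
  set (w := sqrt (eps * u)).
  assert (Hw : 0 < w) by (apply sqrt_lt_R0; nra).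
  assert (Hw2 : w * w = eps * u) by (apply sqrt_sqrt; nra).
  assert (Hws : w <= sqrt eps) by (apply sqrt_le_1_alt; nra).
  destruct (Ff_bounds w (c * u) T t Hw ltac:(nra) ltac:(lra)) as [[_ H] _].
  assert (HE : exp (2 * w * (T - t)) <= B) by (apply exp_mono; nra).
  assert (HE1 : 1 <= exp (2 * w * (T - t))) by (apply exp_ge1; nra).
  assert (Hcu : c * u * (B + 1) <= e / 4).
  { apply Rmult_le_compat_l with (r := 4 * c * (B + 1)) in Hu3; [|nra].
    replace (4 * c * (B + 1) * (e / (4 * c * (B + 1)))) with e in Hu3 by (field; lra). nra. }
  assert (Hwu : w * w <= (e / (4 * B)) ^ 2).
  { rewrite Hw2. apply Rmult_le_compat_l with (r := eps) in Hu2; [|lra].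
    replace (eps * (e ^ 2 / (16 * B ^ 2 * eps))) with ((e / (4 * B)) ^ 2) in Hu2 by (field; split; lra).
    lra. }
  assert (Hwb : w <= e / (4 * B)).
  { destruct (Rle_or_lt w (e / (4 * B))) as [|Hlt]; auto.
    assert (0 < e / (4 * B)) by (apply Rdiv_lt_0_compat; lra). nra. }
  assert (w * B <= e / 4).
  { apply Rmult_le_compat_r with (r := B) in Hwb; [|lra].
    replace (e / (4 * B) * B) with (e / 4) in Hwb by (field; lra). lra. }
  assert (0 <= c * u) by nra.
  assert ((w + c * u) * exp (2 * w * (T - t)) <= (w + c * u) * B) by (apply Rmult_le_compat_l; lra).
  lra.
Qed.

Lemma sum1_zero c eps T phi t : 0 < c -> 0 < eps -> 0 < T -> is_solution c eps T phi ->
  0 <= t <= T -> infinite_sum (fun k => 1 ^ k * phi k t) 0.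
Proof.
  intros hc he hT hs Ht e He.
  destruct (F_small c eps T t hc he Ht (e / 2) ltac:(lra)) as [z [Hz HFz]].
  destruct (conv_z c eps T phi z t hc he hT hs Hz Ht (e / 2) ltac:(lra)) as [N0 HN0].
  exists (max N0 1). intros n Hn.
  assert (HF0 : has_deriv_on (fun _ : R => 0) (fun t => (fun _ : R => 0) t ^ 2 - eps * (1 - 1)) 0 T).
  { eapply hd_ext. apply hd_const. intros; auto. intros; simpl; ring. }
  assert (Hl := lower c eps T phi 1 (fun _ => 0) n hc he hT hs ltac:(lra) HF0 ltac:(cbv beta; ring)
     ltac:(intros; lra) ltac:(lia) t Ht).
  assert (Hle : Pn 1 phi n t <= Pn z phi n t).
  { unfold Pn. apply sum_Rle. intros j Hj. destruct j as [|j]. simpl; lra.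
    assert (phi (S j) t <= 0) by (apply (phi_neg c eps T); auto; lia).
    assert (z ^ S j <= 1) by (apply pow_le1; lra). rewrite pow1. nra. }
  assert (Hc := HN0 n ltac:(lia)). apply Rabs_def2 in Hc.
  unfold R_dist. rewrite Rminus_0_r. fold (Pn 1 phi n t). rewrite Rabs_right by lra. lra.
Qed.

Theorem mainTheorem2 (c eps T : R) (phi : nat -> R -> R)
  (hc : 0 < c) (heps : 0 < eps) (hT : 0 < T)
  (hsol : is_solution c eps T phi) :
  forall t, 0 <= t <= T ->
    phi 0%nat t =
      ((- eps - c * sqrt eps) * exp (2 * sqrt eps * (T - t)) + eps - c * sqrt eps) /
      ((- sqrt eps - c) * exp (2 * sqrt eps * (T - t)) - sqrt eps + c)
    /\ 0 < phi 0%nat t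
    /\ infinite_sum (fun j => phi j t) 0
    /\ infinite_sum (fun k => 1 ^ k * phi k t) 0
    /\ (forall z, 0 <= z < 1 ->
          let w := sqrt (eps * (1 - z)) in
          infinite_sum (fun k => z ^ k * phi k t)
            (((- (eps * (1 - z)) - c * w * (1 - z)) * exp (2 * w * (T - t))
               + eps * (1 - z) - c * w * (1 - z)) /
             ((- w - c * (1 - z)) * exp (2 * w * (T - t)) - w + c * (1 - z)))).
Proof.
  intros t Ht.
  assert (Hs : 0 < sqrt eps) by (apply sqrt_lt_R0; auto).
  assert (H1 := sum1_zero c eps T phi t hc heps hT hsol Ht).
  split; [|split; [|split; [|split]]].
  - rewrite (phi0_eq c eps T phi) by auto. symmetry. apply form_eq; try lra.
    all: try (symmetry; apply sqrt_sqrt; lra); try ring.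
  - apply (phi0_pos c eps T phi); auto.
  - intros e He. destruct (H1 e He) as [N HN]. exists N. intros n Hn.
    rewrite (sum_eq (fun j => phi j t) (fun k => 1 ^ k * phi k t)); [apply HN; auto|]. intros; rewrite pow1; ring.
  - auto.
  - intros z Hz w.
    destruct (FF_ok c eps T z hc heps Hz) as [Hw [Hw2 _]]. fold w in Hw, Hw2.
    rewrite form_eq with (c' := c * (1 - z)); try lra; try nra.
    intros e He. destruct (conv_z c eps T phi z t hc heps hT hsol Hz Ht e He) as [N HN].
    exists N. intros n Hn. apply HN; auto.
Qed.
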